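(* For every connected conjunctive query $q$, $\mathbf E[|q(I)|]=n^{1+\chi(q)}$, where the expectation is over a uniformly chosen matching database $I$ over $[n]$.
   Context: A (full, self-join-free) conjunctive query $q(x_1,\ldots,x_k)=S_1(\bar x_1),\ldots,S_\ell(\bar x_\ell)$ has $k$ distinct variables and $\ell$ atoms over distinct relation symbols, $S_j$ of arity $a_j$; $q(I)$ is the set of $\mathbf a\in[n]^k$ such that the projection of $\mathbf a$ onto each atom lies in $S_j$. It is connected if its hypergraph (variables as vertices, hyperedge $\mathrm{vars}(S_j)$ per atom) is connected. $\chi(q)=k+\ell-\sum_ja_j-c$, with $c$ the number of connected components. A matching database over $[n]$: each $S_j$ has exactly $n$ tuples and each of its columns contains each value of $[n]$ exactly once; uniformly chosen means each $S_j$ independently uniform among these. *)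

(* Defs.v *)
From mathcomp Require Import all_boot all_order all_algebra.
Set Implicit Arguments. Unset Strict Implicit. Unset Printing Implicit Defensive.
Import Order.TTheory GRing.Theory Num.Theory.

(* A full self-join-free conjunctive query with k variables 'I_k and
   l atoms indexed by 'I_l; atom j has arity [a j] and its argument list is
   [x j : 'I_(a j) -> 'I_k] (variables may repeat inside an atom).
   Distinct indices j = distinct relation symbols (self-join-free). *)

Definition atom_vars (k l : nat) (a : 'I_l -> nat)
  (x : forall j : 'I_l, 'I_(a j) -> 'I_k) (j : 'I_l) : {set 'I_k} :=
  [set x j p | p : 'I_(a j)].

Definition qadj (k l : nat) (a : 'I_l -> nat)
  (x : forall j : 'I_l, 'I_(a j) -> 'I_k) : rel 'I_k :=
  fun u w => [exists j : 'I_l, (u \in atom_vars x j) && (w \in atom_vars x j)].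

Definition ncomp (k l : nat) (a : 'I_l -> nat)
  (x : forall j : 'I_l, 'I_(a j) -> 'I_k) : nat :=
  n_comp (qadj x) predT.

Definition qconnected (k l : nat) (a : 'I_l -> nat)
  (x : forall j : 'I_l, 'I_(a j) -> 'I_k) : bool :=
  (0 < k) && [forall u, forall w, connect (qadj x) u w].

Definition chi (k l : nat) (a : 'I_l -> nat)
  (x : forall j : 'I_l, 'I_(a j) -> 'I_k) : int :=
  (k%:Z + l%:Z - (\sum_(j < l) a j)%:Z - (ncomp x)%:Z)%R.

Definition relation (n m : nat) := {set {ffun 'I_m -> 'I_n}}.

Definition matching (n m : nat) (S : relation n m) : bool :=
  (#|S| == n) &&
  [forall c : 'I_m, forall v : 'I_n, #|[set t in S | t c == v]| == 1].

Definition database (n l : nat) (a : 'I_l -> nat) :=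
  {dffun forall j : 'I_l, relation n (a j)}.

Definition matching_db (n l : nat) (a : 'I_l -> nat) (I : database n a) : bool :=
  [forall j, matching (I j)].

Definition answers (n k l : nat) (a : 'I_l -> nat)
  (x : forall j : 'I_l, 'I_(a j) -> 'I_k) (I : database n a)
  : {set {ffun 'I_k -> 'I_n}} :=
  [set v : {ffun 'I_k -> 'I_n} |
     [forall j : 'I_l, [ffun p : 'I_(a j) => v (x j p)] \in I j]].

(* E[|q(I)|] for I uniform among matching databases (each relation independently
   uniform among matching relations = uniform over the product) *)
Definition expected_answers (n k l : nat) (a : 'I_l -> nat)
  (x : forall j : 'I_l, 'I_(a j) -> 'I_k) : rat :=
  ((\sum_(I : database n a | matching_db I) (#|answers x I|)%:R)
     / (#|[set I : database n a | matching_db I]|)%:R)%R.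

(* Main.v *)
Require Import Defs.
From mathcomp Require Import all_boot all_order all_algebra.
From mathcomp Require Import ring zify.
Import Order.TTheory GRing.Theory Num.Theory.

Definition sw {n : nat} (a b y : 'I_n) : 'I_n :=
  if y == a then b else if y == b then a else y.

Lemma swK n (a b : 'I_n) : involutive (sw a b).
Proof.
move=> y; rewrite /sw.
case: (eqVneq y a) => [->|ya]; first by rewrite eqxx; case: eqVneq.
case: (eqVneq y b) => [->|yb]; first by rewrite eqxx.
by rewrite (negbTE ya) (negbTE yb).
Qed.

Definition fsw {n m} (t t' : {ffun 'I_m -> 'I_n}) (u : {ffun 'I_m -> 'I_n}) :
  {ffun 'I_m -> 'I_n} := [ffun c => sw (t c) (t' c) (u c)].

Lemma fswK n m (t t' : {ffun 'I_m -> 'I_n}) : involutive (fsw t t').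
Proof. by move=> u; apply/ffunP=> c; rewrite !ffunE swK. Qed.

Arguments fswK {n m}.
Definition Cset {n m} (t : {ffun 'I_m -> 'I_n}) :=
  [set S : relation n m | matching S && (t \in S)].

Lemma matching_pre n m (t t' : {ffun 'I_m -> 'I_n}) (S : relation n m) :
  matching S -> matching (fsw t t' @^-1: S).
Proof.
case/andP=> /eqP cS /forallP cols; apply/andP; split.
  by rewrite card_preimset ?cS //; exact: inv_inj (fswK t t').
apply/forallP=> c; apply/forallP=> v.
have -> : [set u in fsw t t' @^-1: S | u c == v] =
          fsw t t' @^-1: [set u in S | u c == sw (t c) (t' c) v].
  apply/setP=> u; rewrite !inE ffunE.
  congr (_ && _); apply/eqP/eqP=> [->//|/(congr1 (sw (t c) (t' c)))].
  by rewrite !swK.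
rewrite card_preimset; [exact: (forallP (cols c))|exact: inv_inj (fswK t t')].
Qed.

Lemma Cset_le n m (t t' : {ffun 'I_m -> 'I_n}) : #|Cset t| <= #|Cset t'|.
Proof.
pose F := fun S : relation n m => (fsw t t' @^-1: S : relation n m).
have Finj : injective F.
  have FK : cancel F F by move=> S; apply/setP=> u; rewrite /F !inE fswK.
  exact: can_inj FK.
rewrite -(card_imset _ Finj); apply: subset_leq_card; apply/subsetP=> S'.
case/imsetP=> S; rewrite inE => /andP[mS tS] ->.
rewrite inE matching_pre //= inE.
suff -> : fsw t t' t' = t by [].
by apply/ffunP=> c; rewrite ffunE /sw eqxx; case: eqVneq.
Qed.

Definition Mset n m := [set S : relation n m | matching S].

Lemma Cset_eq n m (t t' : {ffun 'I_m -> 'I_n}) : #|Cset t| = #|Cset t'|.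
Proof. by apply/eqP; rewrite eqn_leq !Cset_le. Qed.

Lemma card_Cset n m (t : {ffun 'I_m -> 'I_n}) :
  #|Cset t| = \sum_(S in Mset n m) (t \in S).
Proof.
rewrite -sum1_card big_mkcond [RHS]big_mkcond /=; apply: eq_bigr => S _.
by rewrite !inE; case: (matching S); case: (t \in S).
Qed.

Lemma card_sum_in (T : finType) (A : {set T}) : \sum_(t : T) (t \in A) = #|A|.
Proof.
rewrite -sum1_card [RHS]big_mkcond /=; apply: eq_bigr => t _.
by case: (t \in A).
Qed.

Lemma double_count n m :
  \sum_(t : {ffun 'I_m -> 'I_n}) #|Cset t| = #|Mset n m| * n.
Proof.
under eq_bigr do rewrite card_Cset.
rewrite exchange_big /=.
rewrite -sum_nat_const; apply: eq_bigr => S; rewrite inE => /andP[/eqP cS _].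
by rewrite card_sum_in.
Qed.

Lemma key n m (t : {ffun 'I_m -> 'I_n}) : (0 < n)%N -> (0 < m)%N ->
  #|Cset t| * n ^ (m.-1) = #|Mset n m|.
Proof.
move=> n0 m0.
have := double_count n m.
under eq_bigr do rewrite (Cset_eq _ _ _ t).
rewrite sum_nat_const.
rewrite (_ : #|xpredT| = n ^ m); last first.
  by rewrite -[LHS]/#|{ffun 'I_m -> 'I_n}| card_ffun !card_ord.
rewrite -{1}(prednK m0) expnS.
move=> h; apply/eqP; rewrite -(eqn_pmul2r n0) -h; apply/eqP.
ring.
Qed.

Lemma Mset_pos n m : (0 < m)%N -> (0 < #|Mset n m|)%N.
Proof.
move=> m0; pose c0 : 'I_m := Ordinal m0.
pose D : relation n m := [set [ffun _ : 'I_m => i] | i : 'I_n].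
apply/card_gt0P; exists D; rewrite inE; apply/andP; split.
  rewrite card_imset ?card_ord // => i j /(congr1 (fun f : {ffun 'I_m -> 'I_n} => f c0)).
  by rewrite !ffunE.
apply/forallP=> c; apply/forallP=> v.
rewrite (_ : [set t in D | t c == v] = [set [ffun _ : 'I_m => v]]) ?cards1 //.
apply/setP=> t; rewrite !inE; apply/andP/eqP.
  by case=> /imsetP[i _ ->]; rewrite ffunE => /eqP->.
by move=> ->; split; [apply/imsetP; exists v|rewrite ffunE].
Qed.

Lemma sum_cond_card (T : finType) (P Q : pred T) :
  \sum_(i | P i) (Q i : nat) = #|[set i | P i && Q i]|.
Proof.
rewrite -sum1_card big_mkcond [RHS]big_mkcond /=; apply: eq_bigr => i _.
by rewrite !inE; case: (P i); case: (Q i).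
Qed.

Lemma card_db n l (a : 'I_l -> nat) (P : forall j, pred (relation n (a j))) :
  #|[set I : database n a | [forall j, P j (I j)]]| = \prod_j #|P j|.
Proof.
rewrite (_ : #|_| = #|(family P : simpl_pred (database n a))|).
  by rewrite card_family foldrE big_map big_enum.
apply: eq_card => I; rewrite inE.
by apply/forallP/familyP.
Qed.

Lemma ncomp1 k l (a : 'I_l -> nat) (x : forall j : 'I_l, 'I_(a j) -> 'I_k) :
  qconnected x -> ncomp x = 1%N.
Proof.
case/andP=> k0 /forallP con; pose u0 : 'I_k := Ordinal k0.
have sym : connect_sym (qadj x).
  apply: sym_connect_sym => u w; rewrite /qadj.
  by apply/existsP/existsP=> -[j]; rewrite andbC; exists j.
rewrite /ncomp (@eq_n_comp_r _ _ _ (connect (qadj x) u0)) ?n_comp_connect //.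
by move=> u; rewrite !inE; apply/esym; exact: (forallP (con u0) u).
Qed.

Lemma N1_eq n k l (a : 'I_l -> nat) (x : forall j : 'I_l, 'I_(a j) -> 'I_k) :
  \sum_(I : database n a | matching_db I) #|answers x I| =
  \sum_(v : {ffun 'I_k -> 'I_n}) \prod_j #|Cset [ffun p : 'I_(a j) => v (x j p)]|.
Proof.
under eq_bigr do rewrite -card_sum_in.
rewrite exchange_big /=; apply: eq_bigr => v _.
rewrite sum_cond_card.
rewrite (_ : [set _ | _] = [set I : database n a | [forall j,
   (fun j (S : relation n (a j)) =>
      matching S && ([ffun p : 'I_(a j) => v (x j p)] \in S)) j (I j)]]).
  rewrite (@card_db n l a (fun j (S : relation n (a j)) =>
      matching S && ([ffun p : 'I_(a j) => v (x j p)] \in S))).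
  apply: eq_bigr => j _; apply: eq_card => S.
  by rewrite !inE.
apply/setP=> I; rewrite !inE /matching_db.
apply/andP/forallP=> [[/forallP h1 /forallP h2] j|h].
  by rewrite h1 h2.
by split; apply/forallP=> j; case/andP: (h j).
Qed.

Lemma N2_eq n l (a : 'I_l -> nat) :
  #|[set I : database n a | matching_db I]| = \prod_j #|Mset n (a j)|.
Proof.
rewrite (_ : [set _ | _] = [set I : database n a | [forall j,
   (fun j (S : relation n (a j)) => matching S) j (I j)]]) //.
rewrite (@card_db n l a (fun j (S : relation n (a j)) => matching S)).
apply: eq_bigr => j _; apply: eq_card => S.
by rewrite !inE.
Qed.
Local Open Scope ring_scope.

Theorem lemma2 (n k l : nat) (a : 'I_l -> nat)
  (x : forall j : 'I_l, 'I_(a j) -> 'I_k) :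
  (0 < n)%N -> (forall j, 0 < a j)%N -> qconnected x ->
  expected_answers n x = (n%:R : rat) ^ (1 + chi x).
Proof.
move=> n0 a0 qc.
set s := (\sum_(j < l) (a j).-1)%N.
have suma : (\sum_(j < l) a j = s + l)%N.
  rewrite /s -[X in (_ + X)%N]card_ord -sum1_card -big_split /=.
  by apply: eq_bigr => j _; rewrite addn1 prednK.
have hchi : 1 + chi x = k%:Z - s%:Z.
  rewrite /chi ncomp1 // suma; lia.
set N1 := (\sum_(I : database n a | matching_db I) #|answers x I|)%N.
set N2 := #|[set I : database n a | matching_db I]|.
have key1 : (N1 * n ^ s = n ^ k * N2)%N.
  rewrite /N1 N1_eq /N2 N2_eq /s expn_sum big_distrl /=.
  rewrite (_ : n ^ k = #|{ffun 'I_k -> 'I_n}|)%N; last by rewrite card_ffun !card_ord.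
  rewrite -sum_nat_const; apply: eq_bigr => v _.
  rewrite -big_split /=; apply: eq_bigr => j _; exact: key.
have N2pos : (0 < N2)%N.
  rewrite /N2 N2_eq; apply: prodn_gt0 => j; exact: Mset_pos.
rewrite /expected_answers -natr_sum -/N1 -/N2 hchi expfzDr; last by rewrite pnatr_eq0 -lt0n.
rewrite -invr_expz.
have -> : (N1%:R : rat) = (n%:R ^+ k * N2%:R) / n%:R ^+ s.
  apply: (canRL (mulfK _)); first by rewrite expf_neq0 // pnatr_eq0 -lt0n.
  by rewrite -!natrX -!natrM key1.
have N2n : (N2%:R : rat) != 0 by rewrite pnatr_eq0 -lt0n.
have nn : (n%:R : rat) != 0 by rewrite pnatr_eq0 -lt0n.
rewrite -!exprnP.
field.
by rewrite N2n expf_neq0.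
Qed.
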